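(* Let $A$ be an algebra of Jordan type half over a field $\mathbb{F}$ of characteristic zero. If $a,b\in A$ are primitive axes of Jordan type half with $(a,b)=0$, then every non-zero, non-identity idempotent of $J=\langle\langle a,b\rangle\rangle$ is a primitive axis of Jordan type half in $A$; that is, $J$ is solid.
   Context: All algebras are commutative, not necessarily associative; $A_\lambda(x)=\{u\in A:xu=\lambda u\}$. A primitive axis of Jordan type half is $x\neq0$ with $x^2=x$, $A=A_1(x)\oplus A_0(x)\oplus A_{1/2}(x)$, $A_1(x)=\mathbb{F}x$, and fusion rules $A_1A_1\subseteq A_1$, $A_1A_0=0$, $A_0A_0\subseteq A_0$, $A_1A_{1/2},A_0A_{1/2}\subseteq A_{1/2}$, $A_{1/2}A_{1/2}\subseteq A_1\oplus A_0$. An algebra of Jordan type half is a commutative algebra generated by such axes; it has a unique Frobenius form $(\cdot,\cdot)$ (bilinear, $(uv,w)=(u,vw)$, $(x,x)=1$ for primitive axes $x$). $J=\langle\langle a,b\rangle\rangle$ is solid if every idempotent $c\in J$ with $c\neq0$, $c\neq1_J$ (the identity of $J$) is a primitive axis of Jordan type half in $A$. *)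

(* Defs.v *)
From mathcomp Require Import all_boot all_algebra.
Set Implicit Arguments. Unset Strict Implicit. Unset Printing Implicit Defensive.
Import GRing.Theory.
Local Open Scope ring_scope.

(* A commutative, not necessarily associative, algebra over F is encoded by
   an F-vector space V (lmodType F) together with a product mul : V -> V -> V
   which is bilinear and commutative. *)
Section JordanTypeHalf.
Variables (F : fieldType) (V : lmodType F) (mul : V -> V -> V).

Definition comm_algebra : Prop :=
  (forall u v, mul u v = mul v u) /\
  (forall (c : F) u v w, mul (c *: u + v) w = c *: mul u w + mul v w).

Definition eigsp (x : V) (l : F) (u : V) : Prop := mul x u = l *: u.

Definition half : F := (2%:R)^-1.

Definition fusion_half (x : V) : Prop :=
  forall u v,
    (eigsp x 1 u -> eigsp x 1 v -> eigsp x 1 (mul u v)) /\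
    (eigsp x 1 u -> eigsp x 0 v -> mul u v = 0) /\
    (eigsp x 0 u -> eigsp x 0 v -> eigsp x 0 (mul u v)) /\
    (eigsp x 1 u -> eigsp x half v -> eigsp x half (mul u v)) /\
    (eigsp x 0 u -> eigsp x half v -> eigsp x half (mul u v)) /\
    (eigsp x half u -> eigsp x half v ->
       exists w1 w0, [/\ eigsp x 1 w1, eigsp x 0 w0 & mul u v = w1 + w0]).

Definition primitive_axis (x : V) : Prop :=
  [/\ x != 0, mul x x = x,
      (* A = A_1(x) + A_0(x) + A_{1/2}(x) (the sum of eigenspaces is direct) *)
      (forall u, exists u1 u0 uh,
          [/\ eigsp x 1 u1, eigsp x 0 u0, eigsp x half uh & u = u1 + u0 + uh]),
      (forall u, eigsp x 1 u <-> exists c : F, u = c *: x)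
    & fusion_half x].

Definition subalgebra (S : V -> Prop) : Prop :=
  [/\ S 0,
      (forall (c : F) u v, S u -> S v -> S (c *: u + v))
    & (forall u v, S u -> S v -> S (mul u v))].

Definition generated (X : V -> Prop) (u : V) : Prop :=
  forall S, subalgebra S -> (forall x, X x -> S x) -> S u.

Definition jordan_type_half_algebra : Prop :=
  comm_algebra /\ (forall u, generated primitive_axis u).

Definition frobenius_form (f : V -> V -> F) : Prop :=
  [/\ (forall (c : F) u v w, f (c *: u + v) w = c * f u w + f v w),
      (forall (c : F) u v w, f u (c *: v + w) = c * f u v + f u w),
      (forall u v w, f (mul u v) w = f u (mul v w))
    & (forall x, primitive_axis x -> f x x = 1)].

Definition gen2 (a b : V) : V -> Prop := generated (fun x => x = a \/ x = b).

Definition is_identity_of (J : V -> Prop) (e : V) : Prop :=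
  J e /\ (forall u, J u -> mul e u = u).

Definition solid (a b : V) : Prop :=
  forall c, gen2 a b c -> mul c c = c -> c != 0 ->
    ~ is_identity_of (gen2 a b) c -> primitive_axis c.

End JordanTypeHalf.

(* Main.v *)
Require Import Defs.
From mathcomp Require Import all_boot all_algebra.
From mathcomp Require Import ring.
Set Implicit Arguments. Unset Strict Implicit. Unset Printing Implicit Defensive.
Import GRing.Theory.
Local Open Scope ring_scope.

Section Basics.
Variables (F : fieldType) (V : lmodType F) (mul : V -> V -> V).
Hypothesis hF : [pchar F] =i pred0.
Hypothesis hcomm : forall u v, mul u v = mul v u.
Hypothesis hlin : forall (c : F) u v w, mul (c *: u + v) w = c *: mul u w + mul v w.

Local Notation h := (Defs.half F).

Lemma two_neq0 : (2%:R : F) != 0.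
Proof. by move/pcharf0P: hF => ->. Qed.

Lemma hE : h = (2%:R)^-1. Proof. by []. Qed.

Lemma mul0l u : mul 0 u = 0.
Proof.
have := hlin 1 0 0 u; rewrite !scale1r addr0 => H.
by apply: (@addrI _ (mul 0 u)); rewrite addr0 -H.
Qed.
Lemma mulDl u v w : mul (u + v) w = mul u w + mul v w.
Proof. by have := hlin 1 u v w; rewrite !scale1r. Qed.
Lemma mulZl c u w : mul (c *: u) w = c *: mul u w.
Proof. by have := hlin c u 0 w; rewrite !addr0 mul0l addr0. Qed.
Lemma mul0r u : mul u 0 = 0. Proof. by rewrite hcomm mul0l. Qed.
Lemma mulDr u v w : mul w (u + v) = mul w u + mul w v.
Proof. by rewrite !(hcomm w) mulDl. Qed.
Lemma mulZr c u w : mul w (c *: u) = c *: mul w u.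
Proof. by rewrite !(hcomm w) mulZl. Qed.
Lemma mulNl u w : mul (- u) w = - mul u w.
Proof. by rewrite -scaleN1r mulZl scaleN1r. Qed.
Lemma mulNr u w : mul w (- u) = - mul w u.
Proof. by rewrite -scaleN1r mulZr scaleN1r. Qed.
Lemma mulBl u v w : mul (u - v) w = mul u w - mul v w.
Proof. by rewrite mulDl mulNl. Qed.
Lemma mulBr u v w : mul w (u - v) = mul w u - mul w v.
Proof. by rewrite mulDr mulNr. Qed.
Lemma mul_suml I (s : seq I) (P : pred I) (G : I -> V) w :
  mul (\sum_(i <- s | P i) G i) w = \sum_(i <- s | P i) mul (G i) w.
Proof.
elim: s => [|x s IH]; first by rewrite !big_nil mul0l.
by rewrite !big_cons; case: (P x); rewrite ?mulDl IH.
Qed.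
Lemma mul_sumr I (s : seq I) (P : pred I) (G : I -> V) w :
  mul w (\sum_(i <- s | P i) G i) = \sum_(i <- s | P i) mul w (G i).
Proof. by rewrite hcomm mul_suml; apply: eq_bigr => i _; rewrite hcomm. Qed.


Definition lin (g : V -> V) := forall (c : F) u v, g (c *: u + v) = c *: g u + g v.

Lemma lin0 g : lin g -> g 0 = 0.
Proof.
move=> Hg; have := Hg 1 0 0; rewrite !scale1r addr0 => H.
by apply: (@addrI _ (g 0)); rewrite addr0 -H.
Qed.
Lemma linD g : lin g -> forall u v, g (u + v) = g u + g v.
Proof. by move=> Hg u v; have := Hg 1 u v; rewrite !scale1r. Qed.
Lemma linZ g : lin g -> forall c u, g (c *: u) = c *: g u.
Proof. by move=> Hg c u; have := Hg c u 0; rewrite !addr0 lin0 // addr0. Qed.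
Lemma linN g : lin g -> forall u, g (- u) = - g u.
Proof. by move=> Hg u; rewrite -scaleN1r linZ // scaleN1r. Qed.
Lemma linB g : lin g -> forall u v, g (u - v) = g u - g v.
Proof. by move=> Hg u v; rewrite linD // linN. Qed.

Lemma lin_id : lin id. Proof. by []. Qed.
Lemma lin_L z g : lin g -> lin (fun u => mul z (g u)).
Proof. by move=> Hg c u v /=; rewrite Hg mulDr mulZr. Qed.
Lemma lin_add g1 g2 : lin g1 -> lin g2 -> lin (fun u => g1 u + g2 u).
Proof.
move=> H1 H2 c u v /=; rewrite H1 H2 scalerDr.
by rewrite -!addrA; congr (_ + _); rewrite addrCA.
Qed.
Lemma lin_scale (a : F) g : lin g -> lin (fun u => a *: g u).
Proof. by move=> H c u v /=; rewrite H scalerDr !scalerA mulrC. Qed.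
Lemma lin_opp g : lin g -> lin (fun u => - g u).
Proof. by move=> H c u v /=; rewrite H opprD scalerN. Qed.
Lemma lin_sub g1 g2 : lin g1 -> lin g2 -> lin (fun u => g1 u - g2 u).
Proof. by move=> H1 H2; apply: lin_add => //; apply: lin_opp. Qed.

Definition LL z u := mul z u.
Definition P1 z u := 2%:R *: mul z (mul z u) - mul z u.
Definition P0 z u := 2%:R *: mul z (mul z u) - 3%:R *: mul z u + u.
Definition Ph z u := 4%:R *: mul z u - 4%:R *: mul z (mul z u).
Definition Q z u := 2%:R *: mul z (mul z (mul z u)) - 3%:R *: mul z (mul z u) + mul z u.

Lemma lin_P1 z : lin (P1 z).
Proof. apply: lin_sub; [apply: lin_scale|]; do ?apply: lin_L; exact: lin_id. Qed.
Lemma lin_P0 z : lin (P0 z).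
Proof.
apply: lin_add; last exact: lin_id.
apply: lin_sub; apply: lin_scale; do ?apply: lin_L; exact: lin_id. Qed.
Lemma lin_Ph z : lin (Ph z).
Proof. apply: lin_sub; apply: lin_scale; do ?apply: lin_L; exact: lin_id. Qed.
Lemma lin_Q z : lin (Q z).
Proof.
apply: lin_add; last by apply: lin_L; exact: lin_id.
apply: lin_sub; apply: lin_scale; do ?apply: lin_L; exact: lin_id. Qed.

Section Eig.
Variable z : V.
Variable l : F.
Variable w : V.
Hypothesis Hw : mul z w = l *: w.
Lemma eLL : mul z (mul z w) = (l * l) *: w.
Proof. by rewrite Hw mulZr Hw scalerA. Qed.
Lemma eLLL : mul z (mul z (mul z w)) = (l * l * l) *: w.
Proof. by rewrite eLL mulZr Hw scalerA. Qed.
Lemma eP1 : P1 z w = (2%:R * (l * l) - l) *: w.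
Proof. by rewrite /P1 eLL Hw scalerA scalerBl. Qed.
Lemma eP0 : P0 z w = (2%:R * (l * l) - 3%:R * l + 1) *: w.
Proof. by rewrite /P0 eLL Hw !scalerA scalerDl scalerBl scale1r. Qed.
Lemma ePh : Ph z w = (4%:R * l - 4%:R * (l * l)) *: w.
Proof. by rewrite /Ph eLL Hw !scalerA scalerBl. Qed.
Lemma eQ : Q z w = (2%:R * (l * l * l) - 3%:R * (l * l) + l) *: w.
Proof. by rewrite /Q eLLL eLL Hw !scalerA scalerDl scalerBl. Qed.
End Eig.

Lemma hh : h * 2%:R = 1.
Proof. by rewrite hE mulVf // two_neq0. Qed.

Ltac scal := rewrite ?hE; field; try done; exact: two_neq0.

Lemma eig1_L z w : eigsp mul z 1 w -> mul z w = w.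
Proof. by rewrite /eigsp scale1r. Qed.
Lemma eig0_L z w : eigsp mul z 0 w -> mul z w = 0.
Proof. by rewrite /eigsp scale0r. Qed.
Lemma eigE_rev z l w : mul z w = l *: w -> eigsp mul z l w. Proof. by []. Qed.
Lemma eig0_rev z w : mul z w = 0 -> eigsp mul z 0 w. Proof. by rewrite /eigsp scale0r. Qed.
Lemma eig1_rev z w : mul z w = w -> eigsp mul z 1 w. Proof. by rewrite /eigsp scale1r. Qed.
Lemma eigE z l w : eigsp mul z l w -> mul z w = l *: w. Proof. by []. Qed.

Lemma eig1_P z w : eigsp mul z 1 w ->
  [/\ P1 z w = w, P0 z w = 0, Ph z w = 0 & Q z w = 0].
Proof.
move=> /eigE H; rewrite (eP1 H) (eP0 H) (ePh H) (eQ H).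
split; first (rewrite -[RHS]scale1r); last 3 first; try (rewrite -(scale0r w)); congr (_ *: _); scal.
Qed.
Lemma eig0_P z w : eigsp mul z 0 w ->
  [/\ P1 z w = 0, P0 z w = w, Ph z w = 0 & Q z w = 0].
Proof.
move=> /eigE H; rewrite (eP1 H) (eP0 H) (ePh H) (eQ H).
split; [|rewrite -[RHS]scale1r| |]; try (rewrite -(scale0r w)); congr (_ *: _); scal.
Qed.
Lemma eigh_P z w : eigsp mul z h w ->
  [/\ P1 z w = 0, P0 z w = 0, Ph z w = w & Q z w = 0].
Proof.
move=> /eigE H; rewrite (eP1 H) (eP0 H) (ePh H) (eQ H).
split; [| |rewrite -[RHS]scale1r|]; try (rewrite -(scale0r w)); congr (_ *: _); scal.
Qed.



Definition lc (r : nat -> F) (vs : seq V) := \sum_(i < size vs) r i *: vs`_i.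
Lemma lcD r s vs : lc r vs + lc s vs = lc (fun i => r i + s i) vs.
Proof. by rewrite /lc -big_split; apply: eq_bigr => i _; rewrite scalerDl. Qed.
Lemma lcZ c r vs : c *: lc r vs = lc (fun i => c * r i) vs.
Proof. by rewrite /lc scaler_sumr; apply: eq_bigr => i _; rewrite scalerA. Qed.
Lemma lcN r vs : - lc r vs = lc (fun i => - r i) vs.
Proof. by rewrite /lc -sumrN; apply: eq_bigr => i _; rewrite scaleNr. Qed.
Lemma lc0 vs : 0 = lc (fun _ => 0) vs.
Proof. by rewrite /lc big1 // => i _; rewrite scale0r. Qed.
Lemma lc_ext r s vs : (forall i, (i < size vs)%N -> r i = s i) -> lc r vs = lc s vs.
Proof. by move=> H; rewrite /lc; apply: eq_bigr => i _; rewrite H. Qed.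
Lemma lc_baseE vs k : lc (fun i => (i == k)%:R) vs = vs`_k.
Proof.
rewrite /lc; case: (ltnP k (size vs)) => Hk.
  rewrite (bigD1 (Ordinal Hk)) //= eqxx scale1r big1 ?addr0 // => i Hi.
  by rewrite (_ : (nat_of_ord i == k) = false) ?scale0r //; apply/negbTE; move: Hi; apply: contra => /eqP Hi; apply/eqP/val_inj.
rewrite nth_default // big1 // => i _.
by rewrite (_ : (nat_of_ord i == k) = false) ?scale0r //; apply/negbTE; rewrite neq_ltn (leq_trans (ltn_ord i) Hk).
Qed.
Lemma lc_base (G : V -> Prop) vs k : G (lc (fun i => (i == k)%:R) vs) -> G vs`_k.
Proof. by rewrite lc_baseE. Qed.

Lemma lc_base' (G : V -> Prop) vs k v : vs`_k = v -> G (lc (fun i => (i == k)%:R) vs) -> G v.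
Proof. by move=> <-; rewrite lc_baseE. Qed.

Ltac lc_fold vs :=
  rewrite ?(lc0 vs); repeat (first [rewrite lcZ | rewrite lcN | rewrite lcD]).
Ltac lc_one vs Hvs k v :=
  pattern v;
  match goal with |- ?G _ => apply: (@lc_base' G vs k v); [by rewrite Hvs|] end; cbv beta.
Ltac lc_start l :=
  let vs := fresh "vs" in let Hvs := fresh "Hvs" in
  pose vs := l; have Hvs : vs = l by []; clearbody vs;
  let rec go k l' := match l' with
    | (?v :: ?r)%SEQ => lc_one vs Hvs k v; go (S k) r
    | nil => idtac end in
  go 0%N l; lc_fold vs.
Ltac lc_cases Hi :=
  lazymatch type of Hi with
  | is_true (?i < 0)%N => exfalso; by rewrite ltn0 in Hi
  | is_true (?i < S _)%N =>
      let i' := fresh "i" in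
      destruct i as [|i']; [simpl; first [ring | scal] | rewrite ltnS in Hi; lc_cases Hi]
  end.
Ltac lc_fin :=
  apply: lc_ext; let i := fresh "i" in let Hi := fresh "Hi" in intros i Hi;
  lazymatch goal with Hv : _ = (_ :: _)%SEQ |- _ => rewrite Hv /= in Hi end;
  lc_cases Hi.



Lemma Q0_eig z : (forall u, Q z u = 0) -> forall u,
  [/\ eigsp mul z 1 (P1 z u), eigsp mul z 0 (P0 z u), eigsp mul z h (Ph z u)
    & u = P1 z u + P0 z u + Ph z u].
Proof.
move=> HQ u; rewrite /eigsp.
set x := mul z u; set y := mul z x; set w := mul z y.
have Hw : 2%:R *: w = 3%:R *: y - x.
  by apply/eqP; rewrite -subr_eq0 opprB addrA addrAC; apply/eqP; exact: HQ.
have Hw4 : 4%:R *: w = 6%:R *: y - 2%:R *: x.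
  by rewrite (_ : 4%:R = 2%:R * 2%:R :> F) ?(natrM _ 2 2) // -scalerA Hw scalerBr scalerA -natrM.
split.
- rewrite /P1 -/x -/y mulBr mulZr -/w Hw scale1r.
  rewrite -/y addrAC; congr (_ - x).
  by rewrite -{2}(scale1r y) -scalerBl; congr (_ *: _); rewrite -(natrB _ (isT : (1 <= 3)%N)).
- by rewrite scale0r /P0 mulDr mulBr !mulZr; exact: HQ u.
- rewrite /Ph -/x -/y mulBr !mulZr -/y -/w Hw4 !scalerBr !scalerA.
  rewrite opprB addrA addrAC -scalerBl addrC.
  have -> : h * 4%:R = 2%:R :> F by scal.
  by congr (_ + _); rewrite -scaleNr; congr (_ *: _); ring.
- rewrite /P1 /P0 /Ph -/x -/y.
  lc_start [:: x; y; u]; lc_fin.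
Qed.

Section Axis.
Variable z : V.
Hypothesis Hz : primitive_axis mul z.

Lemma axis_uniq u1 u0 uh : eigsp mul z 1 u1 -> eigsp mul z 0 u0 -> eigsp mul z h uh ->
  u1 + u0 + uh = 0 -> [/\ u1 = 0, u0 = 0 & uh = 0].
Proof.
move=> H1 H0 Hh E.
have [A1 B1 C1 _] := eig1_P H1.
have [A0 B0 C0 _] := eig0_P H0.
have [Ah Bh Ch _] := eigh_P Hh.
have L1 := lin_P1 z; have L0 := lin_P0 z; have Lh := lin_Ph z.
have e1 : u1 = 0 by move: (congr1 (P1 z) E); rewrite !(linD L1) A1 A0 Ah !addr0 (lin0 L1).
have e0 : u0 = 0 by move: (congr1 (P0 z) E); rewrite !(linD L0) B1 B0 Bh add0r addr0 (lin0 L0).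
have eh : uh = 0 by move: (congr1 (Ph z) E); rewrite !(linD Lh) C1 C0 Ch !add0r (lin0 Lh).
by [].
Qed.

Lemma axis_Q u : Q z u = 0.
Proof.
case: Hz => _ _ Hd _ _.
have [u1 [u0 [uh [H1 H0 Hh ->]]]] := Hd u.
have LQ := lin_Q z.
rewrite !(linD LQ).
have [_ _ _ ->] := eig1_P H1; have [_ _ _ ->] := eig0_P H0; have [_ _ _ ->] := eigh_P Hh.
by rewrite !addr0.
Qed.

Lemma axis_eig u :
  [/\ eigsp mul z 1 (P1 z u), eigsp mul z 0 (P0 z u), eigsp mul z h (Ph z u)
    & u = P1 z u + P0 z u + Ph z u].
Proof. exact: (Q0_eig axis_Q). Qed.


Lemma eig_add l u v : eigsp mul z l u -> eigsp mul z l v -> eigsp mul z l (u + v).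
Proof. by rewrite /eigsp => H1 H2; rewrite mulDr H1 H2 scalerDr. Qed.
Lemma eig_scale l c u : eigsp mul z l u -> eigsp mul z l (c *: u).
Proof. by rewrite /eigsp => H1; rewrite mulZr H1 !scalerA mulrC. Qed.
Lemma eig_opp l u : eigsp mul z l u -> eigsp mul z l (- u).
Proof. by move=> H; rewrite -scaleN1r; apply: eig_scale. Qed.
Lemma eig_sub l u v : eigsp mul z l u -> eigsp mul z l v -> eigsp mul z l (u - v).
Proof. by move=> H1 H2; apply: eig_add => //; apply: eig_opp. Qed.
Lemma eig_0 l : eigsp mul z l 0.
Proof. by rewrite /eigsp mul0r scaler0. Qed.

Definition tau u := u - 2%:R *: Ph z u.
Lemma lin_tau : lin tau.
Proof. by apply: lin_sub; [exact: lin_id | apply: lin_scale; exact: lin_Ph]. Qed.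

Definition even w := exists w1 w0, [/\ eigsp mul z 1 w1, eigsp mul z 0 w0 & w = w1 + w0].

Lemma tau_even w : even w -> tau w = w.
Proof.
case=> w1 [w0 [H1 H0 ->]]; rewrite /tau (linD (lin_Ph z)).
by have [_ _ -> _] := eig1_P H1; have [_ _ -> _] := eig0_P H0; rewrite addr0 scaler0 subr0.
Qed.
Lemma tau_odd w : eigsp mul z h w -> tau w = - w.
Proof.
move=> Hh; rewrite /tau; have [_ _ -> _] := eigh_P Hh.
by rewrite -{1}(scale1r w) -scalerBl -scaleN1r; congr (_ *: _); ring.
Qed.

Lemma split_eo u : exists up um, [/\ even up, eigsp mul z h um & u = up + um].
Proof.
case: Hz => _ _ Hd _ _; have [u1 [u0 [uh [H1 H0 Hh ->]]]] := Hd u.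
by exists (u1 + u0), uh; split => //; exists u1, u0.
Qed.


Lemma even_mul p q : even p -> even q -> even (mul p q).
Proof.
case: Hz => _ _ _ _ Hf.
case=> p1 [p0 [P1' P0' ->]] [q1 [q0 [Q1' Q0' ->]]].
have [F1 [F2 [F3 _]]] := Hf p1 q1.
have [_ [G2 _]] := Hf q1 p0.
have [_ [K2 _]] := Hf p1 q0.
have [_ [_ [K3 _]]] := Hf p0 q0.
exists (mul p1 q1), (mul p0 q0); split; [exact: F1 | exact: K3 |].
rewrite mulDl !mulDr (K2 P1' Q0') (hcomm p0 q1) (G2 Q1' P0') addr0 add0r //.
Qed.
Lemma even_odd p q : even p -> eigsp mul z h q -> eigsp mul z h (mul p q).
Proof.
case: Hz => _ _ _ _ Hf.
case=> p1 [p0 [P1' P0' ->]] Hq; rewrite mulDl; apply: eig_add.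
- by have [_ [_ [_ [F4 _]]]] := Hf p1 q; apply: F4.
- by have [_ [_ [_ [_ [F5 _]]]]] := Hf p0 q; apply: F5.
Qed.
Lemma odd_odd p q : eigsp mul z h p -> eigsp mul z h q -> even (mul p q).
Proof.
case: Hz => _ _ _ _ Hf => Hp Hq.
have [_ [_ [_ [_ [_ F6]]]]] := Hf p q.
have [w1 [w0 [W1 W0 E]]] := F6 Hp Hq.
by exists w1, w0.
Qed.

Lemma tau_mul u v : tau (mul u v) = mul (tau u) (tau v).
Proof.
have [up [um [Ep Om ->]]] := split_eo u.
have [vp [vm [Ep' Om' ->]]] := split_eo v.
have Lt := lin_tau.
rewrite !(linD Lt) (tau_even Ep) (tau_odd Om) (tau_even Ep') (tau_odd Om').
rewrite !mulDl !mulDr !(linD Lt).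
rewrite (tau_even (even_mul Ep Ep')) (tau_odd (even_odd Ep Om')).
rewrite (hcomm um vp) (tau_odd (even_odd Ep' Om)) (tau_even (odd_odd Om Om')).
rewrite !mulNl !mulNr opprK (hcomm vp um).
by [].
Qed.

Lemma tau_inv u : tau (tau u) = u.
Proof.
have [up [um [Ep Om ->]]] := split_eo u.
have Lt := lin_tau.
by rewrite (linD Lt) (tau_even Ep) (tau_odd Om) (linD Lt) (linN Lt) (tau_even Ep) (tau_odd Om) opprK.
Qed.

End Axis.

Section Transport.
Variables (sg rh : V -> V).
Hypothesis sg_lin : lin sg.
Hypothesis sg_mul : forall u v, sg (mul u v) = mul (sg u) (sg v).
Hypothesis sgK : forall u, rh (sg u) = u.
Hypothesis rhK : forall u, sg (rh u) = u.

Lemma sg_eig x l u : eigsp mul (sg x) l u <-> eigsp mul x l (rh u).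
Proof.
rewrite /eigsp; split => H.
- by rewrite -[LHS]sgK sg_mul rhK H -{1}(rhK u) -(linZ sg_lin) sgK.
- by rewrite -(rhK u) -sg_mul H (linZ sg_lin).
Qed.

Lemma transport x : primitive_axis mul x -> primitive_axis mul (sg x).
Proof.
case=> Hx0 Hxx Hd H1 Hf.
have sg0 : sg 0 = 0 := lin0 sg_lin.
split.
- apply: contra Hx0 => /eqP E; apply/eqP; by rewrite -(sgK x) E -sg0 sgK.
- by rewrite -sg_mul Hxx.
- move=> u; have [u1 [u0 [uh [E1 E0 Eh E]]]] := Hd (rh u).
  exists (sg u1), (sg u0), (sg uh); split; try (by apply/sg_eig; rewrite sgK).
  by rewrite -!(linD sg_lin) -E rhK.
- move=> u; split.
  + move/sg_eig/H1 => [c Hc]; exists c; by rewrite -(rhK u) Hc (linZ sg_lin).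
  + case=> c ->; apply/sg_eig; apply/H1; exists c.
    by rewrite -(linZ sg_lin) sgK.
- move=> u v.
  have E : forall l w, eigsp mul (sg x) l w -> eigsp mul x l (rh w) by move=> l w /sg_eig.
  have E' : forall l w, eigsp mul x l w -> eigsp mul (sg x) l (sg w) by move=> l w Hw; apply/sg_eig; rewrite sgK.
  have Hm : mul u v = sg (mul (rh u) (rh v)) by rewrite sg_mul !rhK.
  have [F1 [F2 [F3 [F4 [F5 F6]]]]] := Hf (rh u) (rh v).
  split; [|split; [|split; [|split; [|split]]]]; rewrite Hm.
  + by move=> /E Hu /E Hv; apply: E'; apply: F1.
  + by move=> /E Hu /E Hv; rewrite F2.
  + by move=> /E Hu /E Hv; apply: E'; apply: F3.
  + by move=> /E Hu /E Hv; apply: E'; apply: F4.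
  + by move=> /E Hu /E Hv; apply: E'; apply: F5.
  + move=> /E Hu /E Hv; have [w1 [w0 [W1 W0 ->]]] := F6 Hu Hv.
    by exists (sg w1), (sg w0); split; [exact: E' | exact: E' | exact: (linD sg_lin)].
Qed.
End Transport.



Section Poly.
Definition IsPoly (g : F -> V) :=
  exists s : seq (nat * V), forall t, g t = \sum_(p <- s) t ^+ p.1 *: p.2.
Definition IsSPoly (g : F -> F) :=
  exists s : seq (nat * F), forall t, g t = \sum_(p <- s) t ^+ p.1 * p.2.

Lemma IsPoly_lin v w : IsPoly (fun t => v + t *: w).
Proof.
exists [:: (0%N, v); (1%N, w)] => t.
by rewrite big_cons big_seq1 /= expr0 expr1 scale1r.
Qed.
Lemma IsPoly_const v : IsPoly (fun _ => v).
Proof. by exists [:: (0%N, v)] => t; rewrite big_seq1 /= expr0 scale1r. Qed.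
Lemma IsPoly_add g1 g2 : IsPoly g1 -> IsPoly g2 -> IsPoly (fun t => g1 t + g2 t).
Proof. by case=> s1 H1 [s2 H2]; exists (s1 ++ s2) => t; rewrite big_cat H1 H2. Qed.
Lemma IsPoly_scale c g : IsPoly g -> IsPoly (fun t => c *: g t).
Proof.
case=> s H; exists [seq (p.1, c *: p.2) | p <- s] => t.
rewrite big_map H scaler_sumr; apply: eq_bigr => p _ /=.
by rewrite !scalerA mulrC.
Qed.
Lemma IsPoly_opp g : IsPoly g -> IsPoly (fun t => - g t).
Proof.
move=> H; have := IsPoly_scale (-1) H; case=> s Hs; exists s => t.
by rewrite -Hs scaleN1r.
Qed.
Lemma IsPoly_sub g1 g2 : IsPoly g1 -> IsPoly g2 -> IsPoly (fun t => g1 t - g2 t).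
Proof. by move=> H1 H2; apply: IsPoly_add => //; apply: IsPoly_opp. Qed.
Lemma IsPoly_mul g1 g2 : IsPoly g1 -> IsPoly g2 -> IsPoly (fun t => mul (g1 t) (g2 t)).
Proof.
case=> s1 H1 [s2 H2].
exists [seq (pq.1.1 + pq.2.1, mul pq.1.2 pq.2.2)%N | pq <- [seq (p, q) | p <- s1, q <- s2]] => t.
rewrite big_map big_allpairs H1 mul_suml; apply: eq_bigr => p _.
rewrite H2 mul_sumr; apply: eq_bigr => q _ /=.
by rewrite mulZl mulZr scalerA exprD.
Qed.
Lemma IsPoly_smul (sg : F -> F) g : IsSPoly sg -> IsPoly g -> IsPoly (fun t => sg t *: g t).
Proof.
case=> s1 H1 [s2 H2].
exists [seq (pq.1.1 + pq.2.1, pq.1.2 *: pq.2.2)%N | pq <- [seq (p, q) | p <- s1, q <- s2]] => t.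
rewrite big_map big_allpairs H1 scaler_suml; apply: eq_bigr => p _.
rewrite H2 scaler_sumr; apply: eq_bigr => q _ /=.
by rewrite !scalerA exprD; congr (_ *: _); ring.
Qed.

Lemma natr_inj : injective (fun n : nat => n%:R : F).
Proof.
have K : forall m n : nat, (m <= n)%N -> m%:R = n%:R :> F -> m = n.
  move=> m n Hmn E; have : (n - m)%:R == 0 :> F by rewrite natrB // E subrr.
  by move/pcharf0P: hF => ->; rewrite subn_eq0 => Hnm; apply/eqP; rewrite eqn_leq Hmn Hnm.
move=> m n /= E; case: (leqP m n) => H; first exact: K.
by apply/esym/K => //; exact: ltnW.
Qed.

Lemma poly_vanish (g : F -> V) (pt : nat -> F) : injective pt -> IsPoly g ->
  (forall k, g (pt k) = 0) -> forall t, g t = 0.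
Proof.
move=> Hpt [s Hs] H0.
pose D := (\max_(p <- s) p.1).+1.
pose c i := \sum_(p <- s | p.1 == i) p.2.
have HD : forall p, p \in s -> (p.1 < D)%N by move=> p Hp; rewrite ltnS (leq_bigmax_seq p).
have A : forall t, g t = \sum_(i < D) t ^+ i *: c i.
  move=> t; rewrite Hs.
  under [RHS]eq_bigr => i _ do rewrite scaler_sumr big_mkcond.
  rewrite exchange_big /= [LHS]big_seq_cond [RHS]big_seq_cond.
  apply: eq_bigr => p /andP[Hp _].
  rewrite -big_mkcond /= (big_pred1 (Ordinal (HD p Hp))) //.
have B : forall j : 'I_D, c j = 0.
  pose M : 'M[F]_D := Vandermonde D (\row_(k < D) pt k).
  have HM : M \in unitmx.
    rewrite unitmxE det_Vandermonde unitfE; apply/prodf_neq0 => i _.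
    apply/prodf_neq0 => j Hij; rewrite !mxE subr_eq0; apply/eqP => E.
    by move: (Hpt _ _ E) => /val_inj Eij; move: Hij; rewrite Eij ltnn.
  have Z : forall k : 'I_D, \sum_(i < D) M i k *: c i = 0.
    move=> k; transitivity (g (pt k)); last exact: H0.
    by rewrite A; apply: eq_bigr => i _; rewrite /M /Vandermonde !mxE.
  move=> j.
  have : \sum_(k < D) invmx M k j *: (\sum_(i < D) M i k *: c i) = 0.
    by rewrite big1 // => k _; rewrite Z scaler0.
  under eq_bigr => k _ do rewrite scaler_sumr.
  rewrite exchange_big /=.
  have E : forall i : 'I_D, \sum_(k < D) invmx M k j *: (M i k *: c i) = (M *m invmx M) i j *: c i.
    by move=> i; rewrite mxE scaler_suml; apply: eq_bigr => k _; rewrite scalerA mulrC.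
  rewrite (eq_bigr _ (fun i _ => E i)) mulmxV //.
  under eq_bigr => i _ do rewrite mxE.
  rewrite (bigD1 j) //= eqxx scale1r big1 ?addr0 // => i Hi.
  by rewrite (negbTE Hi) scale0r.
move=> t; rewrite A big1 // => i _; by rewrite B scaler0.
Qed.
End Poly.
Lemma lin_comp g1 g2 : lin g1 -> lin g2 -> lin (fun u => g1 (g2 u)).
Proof. by move=> H1 H2 c u v; rewrite H2 H1. Qed.

Lemma tau_eig0 z w : eigsp mul z 0 w -> tau z w = w.
Proof. by move=> H; apply: tau_even; exists 0, w; split; rewrite ?add0r //; apply: eig_0. Qed.
Lemma tau_eig1 z w : eigsp mul z 1 w -> tau z w = w.
Proof. by move=> H; apply: tau_even; exists w, 0; split; rewrite ?addr0 //; apply: eig_0. Qed.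

Lemma IsSPoly_id : IsSPoly id.
Proof. by exists [:: (1%N, 1)] => t; rewrite big_seq1 /= expr1 mulr1. Qed.


Section Frob.
Variable f : V -> V -> F.
Hypothesis hf : frobenius_form mul f.

Lemma flD u v w : f (u + v) w = f u w + f v w.
Proof. by case: hf => H _ _ _; have := H 1 u v w; rewrite scale1r mul1r. Qed.
Lemma fl0 w : f 0 w = 0.
Proof. by apply: (@addrI _ (f 0 w)); rewrite -flD !addr0. Qed.
Lemma flZ c u w : f (c *: u) w = c * f u w.
Proof. by case: hf => H _ _ _; have := H c u 0 w; rewrite addr0 fl0 addr0. Qed.
Lemma frD u v w : f w (u + v) = f w u + f w v.
Proof. by case: hf => _ H _ _; have := H 1 w u v; rewrite scale1r mul1r. Qed.
Lemma fr0 w : f w 0 = 0.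
Proof. by apply: (@addrI _ (f w 0)); rewrite -frD !addr0. Qed.
Lemma frZ c u w : f w (c *: u) = c * f w u.
Proof. by case: hf => _ H _ _; have := H c w u 0; rewrite addr0 fr0 addr0. Qed.
Lemma fA u v w : f (mul u v) w = f u (mul v w).
Proof. by case: hf. Qed.
Lemma fxx x : primitive_axis mul x -> f x x = 1.
Proof. by case: hf => _ _ _ H; apply: H. Qed.

Lemma h1_neq0 : (1 - h : F) != 0.
Proof.
apply/negP => /eqP E.
have : (1 - h) * 2%:R = 1 :> F by rewrite hE; field; exact: two_neq0.
by rewrite E GRing.mul0r => /eqP; rewrite eq_sym oner_eq0.
Qed.

Lemma fix_h (c : F) : c = h * c -> c = 0.
Proof.
move=> E; have : (1 - h) * c = 0 by rewrite mulrBl mul1r -E subrr.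
by move/eqP; rewrite mulf_eq0 (negbTE h1_neq0) /= => /eqP.
Qed.

Section Pair.
Variables x y : V.
Hypothesis hx : primitive_axis mul x.
Hypothesis hy : primitive_axis mul y.
Hypothesis hxy : f x y = 0.

Lemma pair_half :
  [/\ eigsp mul x 0 (y - 2%:R *: mul x y), eigsp mul x h (2%:R *: mul x y) & f y x = 0].
Proof.
have hx' := hx; case: hx' => _ Hxx Hd H1 _.
have [y1 [y0 [yh [E1 E0 Eh Ey]]]] := Hd y.
have [c Hc] := (H1 y1).1 E1.
have fy0 : f x y0 = 0 by rewrite -{1}Hxx fA (eig0_L E0) fr0.
have fyh : f x yh = 0 by apply: fix_h; rewrite -{1}Hxx fA Eh frZ.
have c0 : c = 0.
  by move: hxy; rewrite Ey !frD fy0 fyh Hc frZ (fxx hx) !addr0 mulr1.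
have y10 : y1 = 0 by rewrite Hc c0 scale0r.
have Hn : 2%:R *: mul x y = yh.
  rewrite Ey y10 add0r mulDr (eig0_L E0) add0r Eh scalerA.
  by rewrite (_ : 2%:R * h = 1) ?scale1r // hE; field; exact: two_neq0.
rewrite Hn; split => //.
- by rewrite Ey y10 add0r addrK.
- rewrite Ey y10 add0r flD.
  have -> : f y0 x = 0 by rewrite -{1}Hxx -fA hcomm (eig0_L E0) fl0.
  rewrite add0r; apply: fix_h.
  by rewrite -{1}Hxx -fA hcomm Eh flZ.
Qed.
End Pair.

Lemma f_suml I (r : seq I) (G : I -> V) w : f (\sum_(i <- r) G i) w = \sum_(i <- r) f (G i) w.
Proof. elim: r => [|x r IH]; by rewrite ?big_nil ?fl0 // !big_cons flD IH. Qed.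
Lemma f_sumr I (r : seq I) (G : I -> V) w : f w (\sum_(i <- r) G i) = \sum_(i <- r) f w (G i).
Proof. elim: r => [|x r IH]; by rewrite ?big_nil ?fr0 // !big_cons frD IH. Qed.
Lemma IsSPoly_f g1 g2 : IsPoly g1 -> IsPoly g2 -> IsSPoly (fun t => f (g1 t) (g2 t)).
Proof.
case=> s1 H1 [s2 H2].
exists [seq (pq.1.1 + pq.2.1, f pq.1.2 pq.2.2)%N | pq <- [seq (p, q) | p <- s1, q <- s2]] => t.
rewrite big_map big_allpairs H1 f_suml; apply: eq_bigr => p _.
rewrite H2 f_sumr; apply: eq_bigr => q _ /=.
by rewrite flZ frZ exprD; ring.
Qed.

Ltac ispoly := repeat first [ apply: IsPoly_lin | apply: IsPoly_const | apply: IsPoly_add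
  | apply: IsPoly_opp | apply: IsPoly_scale | apply: IsPoly_mul | apply: IsPoly_smul
  | apply: IsSPoly_f | apply: IsSPoly_id ].

Lemma axis_family (x n : V) (hx : primitive_axis mul x) (Sxn : mul x n = h *: n)
  (Snn : mul n n = 0) (pair_step : forall k, primitive_axis mul (x + (k.*2)%:R *: n)) t0 :
  primitive_axis mul (x + t0 *: n).
Proof.
have [hx0 Hxx _ _ _] := hx.
pose pt k := (k.*2)%:R : F.
have Hpt : injective pt by move=> i j /natr_inj /double_inj.
pose c t := x + t *: n.
have vanish : forall g, IsPoly g -> (forall k, g (pt k) = 0) -> forall t, g t = 0
  := fun g Hg H => poly_vanish Hpt Hg H.
have HA : forall k, primitive_axis mul (c (pt k)) := pair_step.
have HQ : forall t u, Q (c t) u = 0.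
  move=> t u; apply: (vanish (fun t => Q (c t) u)).
  - rewrite /Q /c; ispoly.
  - move=> k; exact: axis_Q (HA k) u.
have HR : forall t u, P1 (c t) u - f (c t) (P1 (c t) u) *: c t = 0.
  move=> t u; apply: (vanish (fun t => P1 (c t) u - f (c t) (P1 (c t) u) *: c t)).
  - rewrite /P1 /c; ispoly.
  - move=> k; have [E1 _ _ _] := axis_eig (HA k) u.
    have [_ _ _ Hc _] := HA k; have [mu ->] := (Hc _).1 E1.
    by rewrite frZ (fxx (HA k)) mulr1 subrr.
have H3 : forall t u v, mul (c t) (mul (P0 (c t) u) (P0 (c t) v)) = 0.
  move=> t u v; apply: (vanish (fun t => mul (c t) (mul (P0 (c t) u) (P0 (c t) v)))).
  - rewrite /P0 /c; ispoly.
  - move=> k; have [_ E0 _ _] := axis_eig (HA k) u; have [_ E0' _ _] := axis_eig (HA k) v.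
    have [_ _ _ _ Hf] := HA k; have [_ [_ [F3 _]]] := Hf (P0 (c (pt k)) u) (P0 (c (pt k)) v).
    exact: eig0_L (F3 E0 E0').
have H5 : forall t u v, mul (c t) (mul (P0 (c t) u) (Ph (c t) v))
                        - h *: mul (P0 (c t) u) (Ph (c t) v) = 0.
  move=> t u v; apply: (vanish (fun t => mul (c t) (mul (P0 (c t) u) (Ph (c t) v))
                        - h *: mul (P0 (c t) u) (Ph (c t) v))).
  - rewrite /P0 /Ph /c; ispoly.
  - move=> k; have [_ E0 _ _] := axis_eig (HA k) u; have [_ _ Eh _] := axis_eig (HA k) v.
    have [_ _ _ _ Hf] := HA k; have [_ [_ [_ [_ [F5 _]]]]] := Hf (P0 (c (pt k)) u) (Ph (c (pt k)) v).
    by rewrite (eigE (F5 E0 Eh)) subrr.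
have H6 : forall t u v, Ph (c t) (mul (Ph (c t) u) (Ph (c t) v)) = 0.
  move=> t u v; apply: (vanish (fun t => Ph (c t) (mul (Ph (c t) u) (Ph (c t) v)))).
  - rewrite /Ph /c; ispoly.
  - move=> k; have [_ _ Eh _] := axis_eig (HA k) u; have [_ _ Eh' _] := axis_eig (HA k) v.
    have [_ _ _ _ Hf] := HA k; have [_ [_ [_ [_ [_ F6]]]]] := Hf (Ph (c (pt k)) u) (Ph (c (pt k)) v).
    have [w1 [w0 [W1 W0 ->]]] := F6 Eh Eh'.
    rewrite (linD (lin_Ph _)).
    by have [_ _ -> _] := eig1_P W1; have [_ _ -> _] := eig0_P W0; rewrite addr0.
have Hc2 : mul (c t0) (c t0) = c t0.
  rewrite /c mulDl !mulDr !mulZl !mulZr Hxx Sxn (hcomm n x) Sxn Snn.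
  lc_start [:: x; n]; lc_fin.
have Hdec := Q0_eig (HQ t0).
have H1c : forall u, eigsp mul (c t0) 1 u <-> exists mu : F, u = mu *: c t0.
  move=> u; split.
  - move=> E1; exists (f (c t0) (P1 (c t0) u)).
    have [E _ _ _] := eig1_P E1; rewrite -[in LHS]E.
    by apply/eqP; rewrite -subr_eq0; apply/eqP; apply: HR.
  - by case=> mu ->; rewrite /eigsp mulZr Hc2 scale1r.
split; [| exact: Hc2 | | exact: H1c |].
- apply/negP => /eqP E.
  have Es : x + 0 + t0 *: n = 0 by rewrite addr0; exact: E.
  have [Z1 _ _] := axis_uniq (eig1_rev Hxx) (eig_0 x 0) (eig_scale t0 (eigE_rev Sxn)) Es.
  by move: hx0; rewrite Z1 eqxx.
- move=> u; have [A1 A0 Ah E] := Hdec u.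
  by exists (P1 (c t0) u), (P0 (c t0) u), (Ph (c t0) u).
- move=> u v; split; [|split; [|split; [|split; [|split]]]].
  + move=> /H1c [mu ->] /H1c [nu ->]; rewrite mulZl mulZr Hc2.
    by apply/H1c; exists (mu * nu); rewrite scalerA mulrC.
  + move=> /H1c [mu ->] E0; by rewrite mulZl (eig0_L E0) scaler0.
  + move=> E0 E0'; have [_ Eu _ _] := eig0_P E0; have [_ Ev _ _] := eig0_P E0'.
    rewrite -Eu -Ev.
    by apply: eig0_rev; apply: H3.
  + move=> /H1c [mu ->] Eh; rewrite mulZl; apply: eig_scale.
    by rewrite /c (eigE Eh); apply: eig_scale.
  + move=> E0 Eh; have [_ Eu _ _] := eig0_P E0; have [_ _ Ev _] := eigh_P Eh.
    rewrite -Eu -Ev.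
    by apply/eqP; rewrite -subr_eq0; apply/eqP; apply: H5.
  + move=> Eh Eh'; have [_ _ Eu _] := eigh_P Eh; have [_ _ Ev _] := eigh_P Eh'.
    rewrite -Eu -Ev.
    set w := mul _ _.
    have [W1 W0 _ Ew] := Hdec w.
    exists (P1 (c t0) w), (P0 (c t0) w); split => //.
    by rewrite {1}Ew H6 addr0.
Qed.

Section Pair2.
Variables x y : V.
Hypothesis hx : primitive_axis mul x.
Hypothesis hy : primitive_axis mul y.
Hypothesis hxy : f x y = 0.
Let n := 2%:R *: mul x y.

Lemma nsym : 2%:R *: mul y x = n. Proof. by rewrite /n hcomm. Qed.

Lemma pair_facts :
  [/\ mul x (y - n) = 0, mul x n = h *: n, mul y (x - n) = 0 & mul y n = h *: n] /\
  [/\ mul n n = 0, mul (y - n) n = h *: n & mul (y - n) (y - n) = y - n].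
Proof.
have [A0 Ah fyx] := pair_half hx hxy.
have [B0 Bh _] := pair_half hy fyx.
rewrite nsym in B0 Bh.
have hx' := hx; case: hx' => _ _ _ _ Hf.
have [_ [_ [_ [_ [F5 F6]]]]] := Hf (y - n) n.
have E5 := F5 A0 Ah.
have [_ [_ [_ [_ [_ F6']]]]] := Hf n n.
have [w1 [w0 [W1 W0 Ew]]] := F6' Ah Ah.
have Eyn : mul (y - n) n + mul n n = h *: n.
  by rewrite -mulDl addrNK; exact: Bh.
have U : w1 + w0 + (mul (y - n) n - h *: n) = 0.
  by rewrite -Ew addrA (addrC (mul n n)) Eyn subrr.
have [Z1 Z0 Zh] := axis_uniq W1 W0 (eig_sub E5 (eig_scale h Ah)) U.
have Nn : mul n n = 0 by rewrite Ew Z1 Z0 addr0.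
have Yn : mul (y - n) n = h *: n by apply/eqP; rewrite -subr_eq0 Zh.
split; split => //.
- exact: eig0_L A0.
- exact: eig0_L B0.
- have [_ Hyy _ _ _] := hy.
  rewrite mulBr Yn mulBl (hcomm n y) (eigE Bh) Hyy.
  rewrite -addrA -opprD -scalerDl (_ : h + h = 1) ?scale1r //.
  by rewrite hE; field; exact: two_neq0.
Qed.

Lemma pair_step k : primitive_axis mul (x + (k.*2)%:R *: n).
Proof.
have [[Sxyn Sxn Syxn Syn] [Snn Synn Syy]] := pair_facts.
have [hx0 Hxx _ _ _] := hx.
pose sg u := tau x (tau y u).
pose rh u := tau y (tau x u).
have sg_lin : lin sg by apply: lin_comp; apply: lin_tau.
have sg_mul : forall u v, sg (mul u v) = mul (sg u) (sg v).
  by move=> u v; rewrite /sg (tau_mul hy) (tau_mul hx).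
have sgK : forall u, rh (sg u) = u by move=> u; rewrite /rh /sg (tau_inv hx) (tau_inv hy).
have rhK : forall u, sg (rh u) = u by move=> u; rewrite /rh /sg (tau_inv hy) (tau_inv hx).
have Ty : forall s : F, tau y (x + s *: n) = x - (s + 2%:R) *: n.
  move=> s; rewrite (linD (lin_tau y)) (linZ (lin_tau y)) (tau_odd (eigE_rev Syn)).
  rewrite -{1}(subrK n x) (linD (lin_tau y)) (tau_eig0 (eig0_rev Syxn)) (tau_odd (eigE_rev Syn)).
  lc_start [:: x; n]; lc_fin.
have Tx : forall s : F, tau x (x - s *: n) = x + s *: n.
  move=> s; rewrite (linB (lin_tau x)) (linZ (lin_tau x)) (tau_odd (eigE_rev Sxn)).
  rewrite (tau_eig1 (eig1_rev Hxx)); lc_start [:: x; n]; lc_fin.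
elim: k => [|k IH].
  rewrite scale0r addr0; exact: hx.
have := transport sg_lin sg_mul sgK rhK IH.
have E : ((k.+1).*2)%:R = k.*2%:R + 2%:R :> F by rewrite doubleS -addn2 natrD.
by rewrite E /sg Ty Tx.
Qed.

Lemma pair_all t0 : primitive_axis mul (x + t0 *: n).
Proof.
have [[Sxyn Sxn Syxn Syn] [Snn Synn Syy]] := pair_facts.
exact: (axis_family hx Sxn Snn pair_step).
Qed.

End Pair2.

Section Table.
Variables (a b0 n : V).
Hypotheses (Haa : mul a a = a) (Hab : mul a b0 = 0) (Han : mul a n = h *: n)
  (Hbb : mul b0 b0 = b0) (Hbn : mul b0 n = h *: n) (Hnn : mul n n = 0).

Lemma table_mul al be ga al' be' ga' :
  mul (al *: a + be *: b0 + ga *: n) (al' *: a + be' *: b0 + ga' *: n) =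
  (al * al') *: a + (be * be') *: b0 + (h * (al * ga' + ga * al' + be * ga' + ga * be')) *: n.
Proof.
rewrite !mulDl !mulDr !mulZl !mulZr (hcomm b0 a) (hcomm n a) (hcomm n b0).
rewrite Haa Hab Han Hbb Hbn Hnn.
lc_start [:: a; b0; n]; lc_fin.
Qed.

Definition Sp u := exists al be ga, u = al *: a + be *: b0 + ga *: n.

Lemma Sp_sub : subalgebra mul Sp.
Proof.
split.
- by exists 0, 0, 0; rewrite !scale0r !addr0.
- move=> c u v [al [be [ga ->]]] [al' [be' [ga' ->]]].
  exists (c * al + al'), (c * be + be'), (c * ga + ga').
  lc_start [:: a; b0; n]; lc_fin.
- move=> u v [al [be [ga ->]]] [al' [be' [ga' ->]]].
  by rewrite table_mul; do 3 eexists.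
Qed.
End Table.

Section Final.
Variables a b : V.
Hypothesis ha : primitive_axis mul a.
Hypothesis hb : primitive_axis mul b.
Hypothesis hab : f a b = 0.

Lemma final_solid : solid mul a b.
Proof.
have [[Sab0 San Sba Sbn] [Snn Sb0n Sb0b0]] := pair_facts ha hb hab.
have [_ _ fba] := pair_half ha hab.
set n := 2%:R *: mul a b in Sab0 San Sba Sbn Snn Sb0n Sb0b0 *.
have [ha0 Haa _ _ _] := ha.
have [hb0 Hbb _ _ _] := hb.
set b0 := b - n in Sab0 Snn Sb0n Sb0b0 *.
have Eb : b = b0 + n by rewrite /b0 subrK.
have SS := Sp_sub Haa Sab0 San Sb0b0 Sb0n Snn.
have Sgen : forall u, gen2 mul a b u -> Sp a b0 n u.
  move=> u Hu; apply: Hu => // z [->|->].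
  - by exists 1, 0, 0; rewrite scale1r !scale0r !addr0.
  - by exists 0, 1, 1; rewrite scale0r add0r !scale1r.
have b0nz : b0 != 0.
  apply/negP => /eqP E; move: hb0; rewrite Eb E add0r.
  by move: Hbb; rewrite Eb E add0r Snn => <-; rewrite eqxx.
have Ea : eigsp mul a 1 a by apply: eig1_rev.
have Eb0 : eigsp mul a 0 b0 by apply: eig0_rev.
have En : eigsp mul a h n by [].
move=> c Hc Hcc Hc0 Hid.
have [al [be [ga Ec]]] := Sgen c Hc.
have E := Hcc; rewrite Ec table_mul // in E.
have Z : ((al * al) - al) *: a + ((be * be) - be) *: b0
         + ((h * (al * ga + ga * al + be * ga + ga * be)) - ga) *: n = 0.
  transitivity ((al * al) *: a + (be * be) *: b0 + (h * (al * ga + ga * al + be * ga + ga * be)) *: n - (al *: a + be *: b0 + ga *: n)); last by rewrite E subrr.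
  lc_start [:: a; b0; n]; lc_fin.
have [Z1 Z2 Z3] := axis_uniq (eig_scale _ Ea) (eig_scale _ Eb0) (eig_scale _ En) Z.
move/eqP: Z1; rewrite scaler_eq0 (negbTE ha0) orbF => /eqP Zal.
move/eqP: Z2; rewrite scaler_eq0 (negbTE b0nz) orbF => /eqP Zbe.
have Hal : al = 0 \/ al = 1.
  have : al * (al - 1) = 0 by rewrite mulrBr mulr1.
  by move/eqP; rewrite mulf_eq0 subr_eq0 => /orP [/eqP|/eqP]; [left|right].
have Hbe : be = 0 \/ be = 1.
  have : be * (be - 1) = 0 by rewrite mulrBr mulr1.
  by move/eqP; rewrite mulf_eq0 subr_eq0 => /orP [/eqP|/eqP]; [left|right].
case: Hal => Hal; case: Hbe => Hbe; subst al be.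
- exfalso; move: Z3.
  rewrite (_ : _ - ga = - ga); last by ring.
  move=> Z3; move: Hc0; rewrite Ec !scale0r !add0r.
  by move: Z3; rewrite scaleNr => /eqP; rewrite oppr_eq0 => ->.
- have -> : c = b + (ga - 1) *: (2%:R *: mul b a).
    rewrite Ec nsym -/n Eb; lc_start [:: a; b0; n]; lc_fin.
  exact: (pair_all hb ha fba).
- have -> : c = a + ga *: (2%:R *: mul a b) by rewrite Ec scale1r scale0r addr0.
  exact: (pair_all ha hb hab).
- exfalso; apply: Hid; split => // u /Sgen [al' [be' [ga' ->]]].
  have Hg : ga *: n = 0.
    by move: Z3; rewrite (_ : _ - ga = ga) //; rewrite hE; field; exact: two_neq0.
  rewrite Ec Hg addr0 -[X in mul X _]addr0 -[X in mul (_ + X) _](scale0r n) table_mul //.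
  lc_start [:: a; b0; n]; lc_fin.
Qed.
End Final.
End Frob.

End Basics.

Theorem proposition6p7 (F : fieldType) (hF : [pchar F] =i pred0)
  (V : lmodType F) (mul : V -> V -> V)
  (hA : jordan_type_half_algebra mul)
  (f : V -> V -> F) (hf : frobenius_form mul f)
  (a b : V) (ha : primitive_axis mul a) (hb : primitive_axis mul b)
  (hab : f a b = 0) :
  solid mul a b.
Proof.
case: hA => [[hcomm hlin] _].
exact: (final_solid hF hcomm hlin hf ha hb hab).
Qed.
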